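(* Let $\gamma:[0,1]\to\mathbb{R}^2$ be a $C^1$ curve with constant speed $c>0$ (i.e. $\|\gamma'(s)\|=c$ for all $s$), and let $\theta:[0,1]\to\mathbb{R}$ be a turning angle function for $\gamma$. If $\theta(1)-\theta(0)=2\pi m$ with $m\in\mathbb{Z}$, $m\neq 0$, then there exist cuts $0\le c_1\le c_2\le 1$ such that the rearranged curve $r_{(c_1,c_2)}$ is a closed $C^1$ curve, i.e. $r_{(c_1,c_2)}(0)=r_{(c_1,c_2)}(1)$ and $r_{(c_1,c_2)}'(0)=r_{(c_1,c_2)}'(1)$.
   Context: A turning angle function for $\gamma$ is a continuous function $\theta$ with $\gamma'(s)=c(\cos\theta(s),\sin\theta(s))$. Concatenation: if $\alpha$ on $[a_1,b_1]$ and $\beta$ on $[a_2,b_2]$ are $C^1$ planar curves with the same constant speed, $\alpha*\beta$ is the curve on $[0,(b_1-a_1)+(b_2-a_2)]$ that equals $\alpha(s+a_1)$ for $s\le b_1-a_1$ and equals $T(\beta(s-(b_1-a_1)+a_2))$ afterwards, where $T$ is the orientation-preserving rigid motion of $\mathbb{R}^2$ sending $\beta(a_2)$ to $\alpha(b_1)$ and the unit tangent $\beta'(a_2)/c$ to $\alpha'(b_1)/c$ (so $T$ also sends the rotated-by-$\pi/2$ normal to the corresponding normal). This operation is associative. For cuts $0\le c_1\le c_2\le 1$, let $\gamma_1,\gamma_2,\gamma_3$ be the restrictions of $\gamma$ to $[0,c_1]$, $[c_1,c_2]$, $[c_2,1]$ respectively (an arc of length zero is a point that still carries the tangent direction of $\gamma$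 at that parameter). The rearranged curve is $r_{(c_1,c_2)}:=\gamma_1*\gamma_3*\gamma_2:[0,1]\to\mathbb{R}^2$. *)

(* Defs.v *)
From Stdlib Require Import Reals.
Open Scope R_scope.

Definition pt2 := (R * R)%type.

Definition I01 (t : R) : Prop := 0 <= t <= 1.

Definition deriv_on01 (f df : R -> pt2) : Prop :=
  forall s, I01 s ->
    D_in (fun t => fst (f t)) (fun t => fst (df t)) I01 s /\
    D_in (fun t => snd (f t)) (fun t => snd (df t)) I01 s.

Definition cont_on01 (f : R -> R) : Prop :=
  forall s, I01 s -> continue_in f I01 s.

Definition cont2_on01 (f : R -> pt2) : Prop :=
  cont_on01 (fun t => fst (f t)) /\ cont_on01 (fun t => snd (f t)).

Definition norm2 (p : pt2) : R := sqrt (fst p * fst p + snd p * snd p).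

Record piece := Piece { pos : R -> pt2; tang : R -> pt2; lo : R; hi : R }.

Definition vadd (p q : pt2) : pt2 := (fst p + fst q, snd p + snd q).
Definition vsub (p q : pt2) : pt2 := (fst p - fst q, snd p - snd q).
Definition vscale (k : R) (p : pt2) : pt2 := (k * fst p, k * snd p).

(* The rotation sending the unit vector u to the unit vector w:
   cos = u.w, sin = u x w. *)
Definition rot (u w p : pt2) : pt2 :=
  let co := fst u * fst w + snd u * snd w in
  let si := fst u * snd w - snd u * fst w in
  (co * fst p - si * snd p, si * fst p + co * snd p).

(* Concatenation alpha * beta of two pieces of the same constant speed c:
   T is the orientation-preserving rigid motion sending beta(a2) to alpha(b1)
   and the unit tangent beta'(a2)/c to alpha'(b1)/c. *)
Definition concat (c : R) (A B : piece) : piece :=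
  let LA := hi A - lo A in
  let LB := hi B - lo B in
  let u := vscale (/ c) (tang B (lo B)) in
  let w := vscale (/ c) (tang A (hi A)) in
  let T := fun p => vadd (pos A (hi A)) (rot u w (vsub p (pos B (lo B)))) in
  Piece
    (fun s => if Rle_dec s LA then pos A (s + lo A)
              else T (pos B (s - LA + lo B)))
    (fun s => if Rle_dec s LA then tang A (s + lo A)
              else rot u w (tang B (s - LA + lo B)))
    0 (LA + LB).

(* The rearranged curve r_(c1,c2) = gamma_1 * gamma_3 * gamma_2 (associativity:
   computed as (gamma_1 * gamma_3) * gamma_2). *)
Definition rearranged (c : R) (gam dgam : R -> pt2) (c1 c2 : R) : R -> pt2 :=
  let g1 := Piece gam dgam 0 c1 in
  let g2 := Piece gam dgam c1 c2 in
  let g3 := Piece gam dgam c2 1 in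
  pos (concat c (concat c g1 g3) g2).

(* Main.v *)
From Stdlib Require Import Reals ZArith Lra Psatz Classical IndefiniteDescription.
Require Import Defs.
Open Scope R_scope.


Definition cross (a b : R * R) := fst a * snd b - snd a * fst b.
Definition dot (a b : R * R) := fst a * fst b + snd a * snd b.
Definition nrm (a : R * R) := fst a * fst a + snd a * snd a.
Definition ang (a b : R * R) := atan (cross a b / dot a b).
Definition close (a b : R * R) := Rabs (cross a b) < dot a b.
Definition rotA (t : R) (p : R * R) : R * R :=
  (cos t * fst p - sin t * snd p, sin t * fst p + cos t * snd p).
Definition sc (k : R) (p : R * R) : R * R := (k * fst p, k * snd p).

Lemma rotA_comp s t p : rotA s (rotA t p) = rotA (s + t) p.
Proof.
  destruct p as [x y]; unfold rotA; simpl; rewrite cos_plus, sin_plus.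
  f_equal; ring.
Qed.

Lemma rotA_sc t k p : rotA t (sc k p) = sc k (rotA t p).
Proof. destruct p; unfold rotA, sc; simpl; f_equal; ring. Qed.

Lemma close_sym a b : close a b -> close b a.
Proof.
  unfold close, cross, dot; intros H.
  replace (fst b * snd a - snd b * fst a) with (- (fst a * snd b - snd a * fst b)) by ring.
  rewrite Rabs_Ropp; lra.
Qed.

Lemma ang_anti a b : ang b a = - ang a b.
Proof.
  unfold ang, cross, dot.
  replace ((fst b * snd a - snd b * fst a) / (fst b * fst a + snd b * snd a))
    with (- ((fst a * snd b - snd a * fst b) / (fst a * fst b + snd a * snd b))).
  - apply atan_opp.
  - unfold Rdiv. replace (fst b * fst a + snd b * snd a) with (fst a * fst b + snd a * snd b) by ring.
    ring.
Qed.

Lemma ang_self a : ang a a = 0.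
Proof.
  unfold ang, cross. replace (fst a * snd a - snd a * fst a) with 0 by ring.
  unfold Rdiv; rewrite Rmult_0_l; apply atan_0.
Qed.

Lemma close_ang_small a b : close a b -> - (PI/4) < ang a b < PI / 4.
Proof.
  unfold close, ang; intros H.
  assert (Hd : 0 < dot a b) by (pose proof (Rabs_pos (cross a b)); lra).
  assert (Hq : -1 < cross a b / dot a b < 1).
  { apply Rabs_def2 in H. destruct H as [H1 H2]. split.
    - apply (Rmult_lt_reg_r (dot a b)); auto. unfold Rdiv; rewrite Rmult_assoc, Rinv_l by lra. lra.
    - apply (Rmult_lt_reg_r (dot a b)); auto. unfold Rdiv; rewrite Rmult_assoc, Rinv_l by lra. lra. }
  rewrite <- atan_1. rewrite <- (atan_opp 1) in *. split; apply atan_increasing; lra.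
Qed.

Lemma nrm_pos_of_dot a b : 0 < dot a b -> 0 < nrm b.
Proof.
  unfold dot, nrm; intros H.
  destruct (Req_dec (snd b) 0) as [E|E].
  - destruct (Req_dec (fst b) 0) as [E2|E2].
    + rewrite E, E2 in H; lra.
    + rewrite E; nra.
  - nra.
Qed.

Lemma ang_rep a b : 0 < nrm a -> 0 < dot a b ->
  exists k, 0 < k /\ b = sc k (rotA (ang a b) a).
Proof.
  intros Ha Hd. unfold ang.
  set (x := cross a b / dot a b).
  set (r := sqrt (1 + x²)).
  assert (Hr : 0 < r) by (apply sqrt_lt_R0; pose proof (Rle_0_sqr x); lra).
  exists (r * dot a b / nrm a). split.
  - apply Rdiv_lt_0_compat; auto; apply Rmult_lt_0_compat; auto.
  - unfold rotA, sc. rewrite cos_atan, sin_atan. fold r.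
    destruct a as [a1 a2]; destruct b as [b1 b2].
    unfold x, cross, dot, nrm in *; simpl in *.
    f_equal; field_simplify; try lra; field_simplify_eq; try lra; ring.
Qed.

Lemma ang_uniq a b k t : 0 < nrm a -> 0 < k -> - (PI/2) < t < PI/2 ->
  b = sc k (rotA t a) -> ang a b = t.
Proof.
  intros Ha Hk Ht ->. unfold ang.
  assert (Hc : 0 < cos t) by (apply cos_gt_0; lra).
  replace (cross a (sc k (rotA t a)) / dot a (sc k (rotA t a))) with (tan t).
  - apply atan_tan; auto.
  - unfold tan, cross, dot, sc, rotA, nrm in *; destruct a as [a1 a2]; simpl in *.
    field.
    split; [|lra]. intro Z.
      assert (Z' : k * cos t * (a1 * a1 + a2 * a2) = 0) by (rewrite <- Z; ring).
      apply Rmult_integral in Z'. destruct Z' as [Z'|Z']; [|lra].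
      apply Rmult_integral in Z'; lra.
Qed.

Lemma ang_add a b c : 0 < nrm a -> close a b -> close b c -> close a c ->
  ang a c = ang a b + ang b c.
Proof.
  intros Ha Hab Hbc Hac.
  pose proof (close_ang_small _ _ Hab). pose proof (close_ang_small _ _ Hbc).
  assert (Hd1 : 0 < dot a b) by (unfold close in Hab; pose proof (Rabs_pos (cross a b)); lra).
  assert (Hd2 : 0 < dot b c) by (unfold close in Hbc; pose proof (Rabs_pos (cross b c)); lra).
  assert (Hb : 0 < nrm b) by (eapply nrm_pos_of_dot; eauto).
  destruct (ang_rep a b Ha Hd1) as [k1 [Hk1 E1]].
  destruct (ang_rep b c Hb Hd2) as [k2 [Hk2 E2]].
  set (t1 := ang a b) in *; set (t2 := ang b c) in *; clearbody t1 t2.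
  apply (ang_uniq a c (k2 * k1)).
  - auto.
  - apply Rmult_lt_0_compat; auto.
  - lra.
  - rewrite E2, E1, rotA_sc, rotA_comp.
    unfold sc; simpl. rewrite (Rplus_comm t2). f_equal; ring.
Qed.

Lemma cell a b c d : 0 < nrm a -> 0 < nrm c ->
  close a b -> close b c -> close a c -> close c d -> close d a ->
  ang a b + ang b c + ang c d + ang d a = 0.
Proof.
  intros Ha Hc H1 H2 H3 H4 H5.
  rewrite <- (ang_add a b c) by auto.
  assert (ang c a = ang c d + ang d a) by (apply ang_add; auto; apply close_sym; auto).
  rewrite (ang_anti a c) in H. lra.
Qed.

Definition UC1 (f : R -> R) := forall eps, 0 < eps -> exists del, 0 < del /\
  forall x y, 0 <= x <= 1 -> 0 <= y <= 1 -> Rabs (x - y) < del -> Rabs (f x - f y) < eps.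

Definition UC2 (f : R -> R -> R) := forall eps, 0 < eps -> exists del, 0 < del /\
  forall x y x' y', 0 <= x <= 1 -> 0 <= y <= 1 -> 0 <= x' <= 1 -> 0 <= y' <= 1 ->
   Rabs (x - x') < del -> Rabs (y - y') < del -> Rabs (f x y - f x' y') < eps.

Definition clamp (x : R) := Rmax 0 (Rmin 1 x).

Lemma clamp_id x : 0 <= x <= 1 -> clamp x = x.
Proof. intros; unfold clamp, Rmax, Rmin; repeat destruct Rle_dec; lra. Qed.
Lemma clamp_in x : 0 <= clamp x <= 1.
Proof. unfold clamp, Rmax, Rmin; repeat destruct Rle_dec; lra. Qed.
Lemma clamp_lip x y : Rabs (clamp y - clamp x) <= Rabs (y - x).
Proof. unfold clamp, Rmax, Rmin; repeat destruct Rle_dec; split_Rabs; lra. Qed.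

Lemma cont_pt_eps (f : R -> R) x :
  (forall eps, 0 < eps -> exists del, 0 < del /\ forall y, Rabs (y - x) < del -> Rabs (f y - f x) < eps) ->
  continuity_pt f x.
Proof.
  intros H eps Heps. destruct (H eps Heps) as [d [Hd Hf]].
  exists d; split; auto. intros y [_ Hy]. simpl in *. unfold R_dist in *. apply Hf; auto.
Qed.

Lemma UC1_clamp_cont f : UC1 f -> forall x, continuity_pt (fun t => f (clamp t)) x.
Proof.
  intros H x. apply cont_pt_eps. intros eps He. destruct (H eps He) as [d [Hd Hf]].
  exists d; split; auto. intros y Hy. apply Hf; try apply clamp_in.
  pose proof (clamp_lip x y); lra.
Qed.

Lemma UC1_min f : UC1 f -> exists x0, 0 <= x0 <= 1 /\ forall x, 0 <= x <= 1 -> f x0 <= f x.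
Proof.
  intros H. destruct (continuity_ab_min (fun t => f (clamp t)) 0 1) as [x0 [H1 H2]].
  - lra.
  - intros; apply UC1_clamp_cont; auto.
  - exists x0; split; auto. intros x Hx. specialize (H1 x Hx). rewrite !clamp_id in H1; auto.
Qed.

Definition cont_on01' (f : R -> R) := forall s, 0 <= s <= 1 -> continue_in f (fun t => 0 <= t <= 1) s.

Lemma UC1_of_cont f : cont_on01' f -> UC1 f.
Proof.
  intros H.
  assert (HU : uniform_continuity (fun t => f (clamp t)) (fun c => 0 <= c <= 1)).
  { apply Heine. apply compact_P3. intros x Hx. apply cont_pt_eps.
    intros eps He. destruct (H x Hx eps He) as [d [Hd Hf]]. exists d; split; auto.
    intros y Hy. rewrite (clamp_id x Hx).
    destruct (Req_dec (clamp y) x) as [E|E].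
    - rewrite E. rewrite Rminus_diag, Rabs_R0; auto.
    - pose proof (clamp_lip x y) as L. rewrite (clamp_id x Hx) in L.
      specialize (Hf (clamp y)). simpl in Hf. unfold R_dist in Hf. apply Hf.
      split; [split; [apply clamp_in| auto] | lra]. }
  intros eps He. destruct (HU (mkposreal eps He)) as [[d Hd] Hf]. exists d; split; auto.
  intros x y Hx Hy Hxy. specialize (Hf x y Hx Hy Hxy). simpl in Hf.
  rewrite !clamp_id in Hf; auto.
Qed.

Lemma UC2_min k : UC2 k -> exists x0 y0, 0 <= x0 <= 1 /\ 0 <= y0 <= 1 /\
  forall x y, 0 <= x <= 1 -> 0 <= y <= 1 -> k x0 y0 <= k x y.
Proof.
  intros H.
  assert (Hy : forall y, exists x, 0 <= y <= 1 -> 0 <= x <= 1 /\ forall x', 0 <= x' <= 1 -> k x y <= k x' y).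
  { intros y. destruct (Rle_dec 0 y) as [h1|h1]; [destruct (Rle_dec y 1) as [h2|h2]|].
    - destruct (UC1_min (fun x => k x y)) as [x0 [? ?]].
      + intros eps He. destruct (H eps He) as [d [Hd Hf]]. exists d; split; auto.
        intros; apply Hf; auto; try lra. rewrite Rminus_diag, Rabs_R0; auto.
      + exists x0; auto.
    - exists 0; intros; lra.
    - exists 0; intros; lra. }
  set (mx := fun y => proj1_sig (constructive_indefinite_description _ (Hy y))).
  assert (Hmx : forall y, 0 <= y <= 1 -> 0 <= mx y <= 1 /\ forall x', 0 <= x' <= 1 -> k (mx y) y <= k x' y).
  { intros y. unfold mx. destruct (constructive_indefinite_description _ (Hy y)); simpl; auto. }
  destruct (UC1_min (fun y => k (mx y) y)) as [y0 [Hy0 Hmin]].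
  - intros eps He. destruct (H eps He) as [d [Hd Hf]]. exists d; split; auto.
    intros y y' Hy1 Hy2 Hyy.
    destruct (Hmx y Hy1) as [A1 A2]. destruct (Hmx y' Hy2) as [B1 B2].
    assert (U1 := Hf (mx y') y (mx y') y' B1 Hy1 B1 Hy2).
    assert (U2 := Hf (mx y) y' (mx y) y A1 Hy2 A1 Hy1).
    rewrite Rminus_diag, Rabs_R0 in U1, U2.
    specialize (U1 Hd Hyy).
    assert (Rabs (y' - y) < d) by (rewrite Rabs_minus_sym; auto).
    specialize (U2 Hd H0).
    specialize (A2 (mx y') B1). specialize (B2 (mx y) A1).
    split_Rabs; lra.
  - exists (mx y0), y0. destruct (Hmx y0 Hy0) as [A1 A2]. repeat split; try lra.
    intros x y Hx Hy1. specialize (Hmin y Hy1). specialize (Hmx y Hy1) as [_ B]. specialize (B x Hx). lra.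
Qed.

Lemma UC2_bound f : UC2 f -> exists M, 0 <= M /\ forall x y, 0 <= x <= 1 -> 0 <= y <= 1 -> Rabs (f x y) <= M.
Proof.
  intros H.
  destruct (UC2_min f H) as [x0 [y0 [_ [_ H1]]]].
  destruct (UC2_min (fun x y => - f x y)) as [x1 [y1 [_ [_ H2]]]].
  - intros eps He. destruct (H eps He) as [d [Hd Hf]]. exists d; split; auto.
    intros. replace (- f x y - - f x' y') with (- (f x y - f x' y')) by ring. rewrite Rabs_Ropp; auto.
  - exists (Rabs (f x0 y0) + Rabs (f x1 y1)). split.
    + pose proof (Rabs_pos (f x0 y0)); pose proof (Rabs_pos (f x1 y1)); lra.
    + intros x y Hx Hy. specialize (H1 x y Hx Hy). specialize (H2 x y Hx Hy). split_Rabs; lra.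
Qed.

Lemma UC2_const a : UC2 (fun _ _ => a).
Proof. intros eps He; exists 1; split; [lra|]; intros. rewrite Rminus_diag, Rabs_R0; auto. Qed.

Lemma UC2_plus f g : UC2 f -> UC2 g -> UC2 (fun x y => f x y + g x y).
Proof.
  intros Hf Hg eps He. destruct (Hf (eps/2)) as [d1 [Hd1 F]]; [lra|].
  destruct (Hg (eps/2)) as [d2 [Hd2 G]]; [lra|].
  exists (Rmin d1 d2); split; [apply Rmin_pos; auto|]. intros.
  assert (A := F x y x' y' H H0 H1 H2). assert (B := G x y x' y' H H0 H1 H2).
  pose proof (Rmin_l d1 d2); pose proof (Rmin_r d1 d2).
  assert (A' : Rabs (f x y - f x' y') < eps/2) by (apply A; lra).
  assert (B' : Rabs (g x y - g x' y') < eps/2) by (apply B; lra).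
  split_Rabs; lra.
Qed.

Lemma UC2_opp f : UC2 f -> UC2 (fun x y => - f x y).
Proof.
  intros H eps He. destruct (H eps He) as [d [Hd Hf]]. exists d; split; auto.
  intros. replace (- f x y - - f x' y') with (- (f x y - f x' y')) by ring. rewrite Rabs_Ropp; auto.
Qed.

Lemma UC2_minus f g : UC2 f -> UC2 g -> UC2 (fun x y => f x y - g x y).
Proof. intros; apply (UC2_plus f (fun x y => - g x y)); auto; apply UC2_opp; auto. Qed.

Lemma UC2_mult f g : UC2 f -> UC2 g -> UC2 (fun x y => f x y * g x y).
Proof.
  intros Hf Hg. destruct (UC2_bound f Hf) as [Mf [HMf Bf]]. destruct (UC2_bound g Hg) as [Mg [HMg Bg]].
  intros eps He.
  set (e' := eps / (2 * (Mf + Mg + 1))).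
  assert (He' : 0 < e') by (unfold e'; apply Rdiv_lt_0_compat; lra).
  destruct (Hf e' He') as [d1 [Hd1 F]]. destruct (Hg e' He') as [d2 [Hd2 G]].
  exists (Rmin d1 d2); split; [apply Rmin_pos; auto|]. intros.
  pose proof (Rmin_l d1 d2); pose proof (Rmin_r d1 d2).
  assert (A : Rabs (f x y - f x' y') < e') by (apply F; auto; lra).
  assert (B : Rabs (g x y - g x' y') < e') by (apply G; auto; lra).
  replace (f x y * g x y - f x' y' * g x' y') with ((f x y - f x' y') * g x y + f x' y' * (g x y - g x' y')) by ring.
  assert (E1 : Rabs ((f x y - f x' y') * g x y) <= e' * Mg).
  { rewrite Rabs_mult. apply Rmult_le_compat; try apply Rabs_pos; try lra. apply Bg; auto. }
  assert (E2 : Rabs (f x' y' * (g x y - g x' y')) <= Mf * e').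
  { rewrite Rabs_mult. apply Rmult_le_compat; try apply Rabs_pos; try lra. apply Bf; auto. }
  assert (E3 : e' * Mg + Mf * e' < eps).
  { unfold e'. apply (Rmult_lt_reg_r (2 * (Mf + Mg + 1))); [lra|].
    field_simplify; try lra. nra. }
  pose proof (Rabs_triang ((f x y - f x' y') * g x y) (f x' y' * (g x y - g x' y'))). lra.
Qed.

Lemma UC2_y u : UC1 u -> UC2 (fun _ y => u y).
Proof.
  intros H eps He. destruct (H eps He) as [d [Hd F]]. exists d; split; auto.
Qed.

Lemma UC2_xy u : UC1 u -> UC2 (fun x y => u (x * y)).
Proof.
  intros H eps He. destruct (H eps He) as [d [Hd F]]. exists (d/2); split; [lra|].
  intros x y x' y' Hx Hy Hx' Hy' H1 H2.
  apply F; try (split; nra).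
  replace (x * y - x' * y') with ((x - x') * y + x' * (y - y')) by ring.
  assert (A1 : Rabs ((x - x') * y) <= Rabs (x - x')).
  { rewrite Rabs_mult. rewrite (Rabs_right y) by lra. pose proof (Rabs_pos (x - x')). nra. }
  assert (A2 : Rabs (x' * (y - y')) <= Rabs (y - y')).
  { rewrite Rabs_mult. rewrite (Rabs_right x') by lra. pose proof (Rabs_pos (y - y')). nra. }
  pose proof (Rabs_triang ((x - x') * y) (x' * (y - y'))). lra.
Qed.

Fixpoint sm (f : nat -> R) (n : nat) : R := match n with 0%nat => 0 | S k => sm f k + f k end.

Lemma sm_ext f g n : (forall i, (i < n)%nat -> f i = g i) -> sm f n = sm g n.
Proof. induction n; simpl; intros; auto. rewrite IHn, H; auto. Qed.

Lemma sm_zero f n : (forall i, (i < n)%nat -> f i = 0) -> sm f n = 0.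
Proof. induction n; simpl; intros; auto. rewrite IHn, H; auto; lra. Qed.

Lemma sm_gen A Bf h n : sm (fun i => A i + (h (S i) - h i) - Bf i) n = sm A n + h n - h 0%nat - sm Bf n.
Proof. induction n; simpl; [lra|]. rewrite IHn; lra. Qed.

Lemma sm_tel h n : sm (fun i => h (S i) - h i) n = h n - h 0%nat.
Proof. induction n; simpl; [lra|]. rewrite IHn; lra. Qed.

Lemma nrm_pos p : p <> (0, 0) -> 0 < nrm p.
Proof.
  destruct p as [a b]; unfold nrm; simpl; intros H.
  destruct (Req_dec a 0); destruct (Req_dec b 0); subst; try nra. congruence.
Qed.

Lemma nrm_rotA t p : nrm (rotA t p) = nrm p.
Proof.
  unfold nrm, rotA; simpl. pose proof (sin2_cos2 t). unfold Rsqr in H. nra.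
Qed.

Lemma abs_prod_le x y M e : Rabs x <= M -> Rabs y <= e -> Rabs (x * y) <= M * e.
Proof. intros; rewrite Rabs_mult; apply Rmult_le_compat; auto; apply Rabs_pos. Qed.

Lemma close_of_near a b M mu e : 0 <= M -> 0 <= e -> mu <= nrm a -> Rabs (fst a) <= M -> Rabs (snd a) <= M ->
  Rabs (fst b - fst a) <= e -> Rabs (snd b - snd a) <= e -> 4 * M * e < mu -> close a b.
Proof.
  intros HM He Hmu H1 H2 H3 H4 H5. unfold close, cross, dot.
  destruct a as [a1 a2]; destruct b as [b1 b2]; simpl in *. unfold nrm in Hmu; simpl in Hmu.
  replace (a1 * b2 - a2 * b1) with (a1 * (b2 - a2) - a2 * (b1 - a1)) by ring.
  replace (a1 * b1 + a2 * b2) with (a1 * a1 + a2 * a2 + a1 * (b1 - a1) + a2 * (b2 - a2)) by ring.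
  pose proof (abs_prod_le _ _ _ _ H1 H4). pose proof (abs_prod_le _ _ _ _ H2 H3).
  pose proof (abs_prod_le _ _ _ _ H1 H3). pose proof (abs_prod_le _ _ _ _ H2 H4).
  revert H H0 H6 H7. split_Rabs; lra.
Qed.

Lemma grid_in i N : (i <= N)%nat -> (0 < N)%nat -> 0 <= INR i / INR N <= 1.
Proof.
  intros H HN. apply le_INR in H. apply lt_INR in HN. simpl in HN. split.
  - unfold Rdiv; apply Rmult_le_pos; [apply pos_INR| left; apply Rinv_0_lt_compat; lra].
  - apply (Rmult_le_reg_r (INR N)); auto. unfold Rdiv; rewrite Rmult_assoc, Rinv_l; lra.
Qed.

Lemma grid_step i N : (0 < N)%nat -> INR (S i) / INR N - INR i / INR N = / INR N.
Proof. intros HN. apply lt_INR in HN. simpl in HN. rewrite S_INR. field. lra. Qed.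

Lemma winding (H : R -> R -> R * R) (phi : R -> R) :
  UC2 (fun x y => fst (H x y)) -> UC2 (fun x y => snd (H x y)) -> UC1 phi ->
  (forall x y, 0 <= x <= 1 -> 0 <= y <= 1 -> H x y <> (0, 0)) ->
  (forall x, 0 <= x <= 1 -> H x 0 = H 0 0) ->
  (forall y, 0 <= y <= 1 -> H 0 y = H 0 0) ->
  (forall x, 0 <= x <= 1 -> H x 1 = H 0 0) ->
  (forall y, 0 <= y <= 1 -> H 1 y = rotA (phi y) (H 0 0)) ->
  phi 1 = phi 0.
Proof.
  intros U1 U2 Uphi Hnz Hb Hl Ht Hr.
  set (v := H 0 0).
  assert (Un : UC2 (fun x y => nrm (H x y))).
  { unfold nrm. apply UC2_plus; apply UC2_mult; auto. }
  destruct (UC2_min _ Un) as [x0 [y0 [Hx0 [Hy0 Hmin]]]].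
  set (mu := nrm (H x0 y0)).
  assert (Hmu : 0 < mu) by (apply nrm_pos; apply Hnz; auto).
  destruct (UC2_bound _ U1) as [M1 [HM1 B1]]. destruct (UC2_bound _ U2) as [M2 [HM2 B2]].
  set (M := M1 + M2 + 1).
  set (e := mu / (4 * M + 4)).
  assert (He : 0 < e) by (unfold e, M; apply Rdiv_lt_0_compat; lra).
  assert (HMe : 4 * M * e < mu).
  { unfold e. apply (Rmult_lt_reg_r (4 * M + 4)); [unfold M; lra|].
    field_simplify; [|unfold M; lra]. unfold M in *. nra. }
  destruct (U1 e He) as [d1 [Hd1 D1]]. destruct (U2 e He) as [d2 [Hd2 D2]].
  destruct (Uphi (PI/2)) as [d3 [Hd3 D3]]; [pose proof PI_RGT_0; lra|].
  set (d := Rmin d1 (Rmin d2 d3)).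
  assert (Hd : 0 < d) by (unfold d; repeat apply Rmin_pos; auto).
  destruct (archimed_cor1 d Hd) as [N [HN HN0]].
  assert (dd1 : d <= d1) by (unfold d; apply Rmin_l).
  assert (dd2 : d <= d2) by (unfold d; eapply Rle_trans; [apply Rmin_r| apply Rmin_l]).
  assert (dd3 : d <= d3) by (unfold d; eapply Rle_trans; [apply Rmin_r| apply Rmin_r]).
  set (g := fun i : nat => INR i / INR N).
  set (p := fun i j => H (g i) (g j)).
  assert (Hg : forall i, (i <= N)%nat -> 0 <= g i <= 1) by (intros; apply grid_in; auto).
  assert (HNpos : 0 < INR N) by (apply lt_INR in HN0; simpl in HN0; lra).
  assert (Hinv : 0 < / INR N) by (apply Rinv_0_lt_compat; auto).
  assert (Hnear : forall i i', (i <= N)%nat -> (i' <= N)%nat -> (i' = i \/ i' = S i)%nat -> Rabs (g i' - g i) < d).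
  { intros i i' Hi Hi' [E|E]; subst i'.
    - rewrite Rminus_diag, Rabs_R0; auto.
    - unfold g; rewrite grid_step by auto. rewrite Rabs_right; lra. }
  assert (Hnear' : forall i i', (i <= N)%nat -> (i' <= N)%nat -> (i' = i \/ i' = S i \/ i = S i')%nat -> Rabs (g i' - g i) < d).
  { intros i i' Hi Hi' [E|[E|E]].
    - apply Hnear; auto.
    - apply Hnear; auto.
    - rewrite Rabs_minus_sym. apply Hnear; auto. }
  assert (Hclose : forall i j i' j', (i <= N)%nat -> (j <= N)%nat -> (i' <= N)%nat -> (j' <= N)%nat ->
     (i' = i \/ i' = S i \/ i = S i')%nat -> (j' = j \/ j' = S j \/ j = S j')%nat -> close (p i j) (p i' j')).
  { intros i j i' j' Hi Hj Hi' Hj' Ei Ej.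
    pose proof (Hnear' i i' Hi Hi' Ei). pose proof (Hnear' j j' Hj Hj' Ej).
    apply (close_of_near _ _ M mu e); try (unfold M; lra).
    - unfold mu, p. apply Hmin; auto.
    - unfold p. pose proof (B1 (g i) (g j) (Hg i Hi) (Hg j Hj)). unfold M; lra.
    - unfold p. pose proof (B2 (g i) (g j) (Hg i Hi) (Hg j Hj)). unfold M; lra.
    - unfold p. left. apply D1; auto; lra.
    - unfold p. left. apply D2; auto; lra.
    - exact HMe. }
  assert (Hnrm : forall i j, (i <= N)%nat -> (j <= N)%nat -> 0 < nrm (p i j)).
  { intros. apply nrm_pos. apply Hnz; auto. }
  set (Srow := fun j => sm (fun i => ang (p i j) (p (S i) j)) N).
  set (Vt := fun i j => ang (p i j) (p i (S j))).
  assert (Hrow : forall j, (j < N)%nat -> Srow j + Vt N j - Vt 0%nat j - Srow (S j) = 0).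
  { intros j Hj. unfold Srow.
    assert (E := sm_gen (fun i => ang (p i j) (p (S i) j)) (fun i => ang (p i (S j)) (p (S i) (S j))) (fun i => Vt i j) N).
    rewrite sm_zero in E. { simpl in E. lra. }
    intros i Hi. unfold Vt.
      pose proof (cell (p i j) (p (S i) j) (p (S i) (S j)) (p i (S j))) as Cl.
      rewrite (ang_anti (p i (S j)) (p (S i) (S j))) in Cl.
      rewrite (ang_anti (p i j) (p i (S j))) in Cl.
      rewrite <- Cl; [ring| | | | | | |]; try apply Hnrm; try lia;
      apply Hclose; lia. }
  assert (Hcol : sm (fun j => Vt N j + ((- Srow (S j)) - (- Srow j)) - Vt 0%nat j) N = 0).
  { apply sm_zero. intros j Hj. rewrite <- (Hrow j Hj). ring. }
  rewrite (sm_gen (fun j => Vt N j) (fun j => Vt 0%nat j) (fun j => - Srow j) N) in Hcol.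
  assert (gN : g N = 1) by (unfold g; field; lra).
  assert (g0 : g 0%nat = 0) by (unfold g; simpl; unfold Rdiv; ring).
  assert (S0 : Srow 0%nat = 0).
  { unfold Srow. apply sm_zero. intros i Hi. unfold p. rewrite g0, (Hb (g i)), (Hb (g (S i))) by (apply Hg; lia).
    apply ang_self. }
  assert (SN : Srow N = 0).
  { unfold Srow. apply sm_zero. intros i Hi. unfold p. rewrite gN, (Ht (g i)), (Ht (g (S i))) by (apply Hg; lia).
    apply ang_self. }
  assert (V0 : sm (Vt 0%nat) N = 0).
  { apply sm_zero. intros j Hj. unfold Vt, p. rewrite g0, (Hl (g j)), (Hl (g (S j))) by (apply Hg; lia).
    apply ang_self. }
  assert (VN : sm (Vt N) N = phi (g N) - phi (g 0%nat)).
  { rewrite <- (sm_tel (fun j => phi (g j))). apply sm_ext. intros j Hj.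
    unfold Vt, p. rewrite gN, (Hr (g j)), (Hr (g (S j))) by (apply Hg; lia).
    apply (ang_uniq _ _ 1).
    - rewrite nrm_rotA. fold v. replace v with (p 0%nat 0%nat) by (unfold p; rewrite g0; auto). apply Hnrm; lia.
    - lra.
    - assert (Rabs (phi (g (S j)) - phi (g j)) < PI/2).
      { apply D3; try apply Hg; try lia. pose proof (Hnear j (S j)). assert (Rabs (g (S j) - g j) < d) by (apply Hnear; lia). lra. }
      split_Rabs; lra.
    - rewrite rotA_comp.
      replace (phi (g (S j)) - phi (g j) + phi (g j)) with (phi (g (S j))) by ring.
      unfold sc. destruct (rotA (phi (g (S j))) (H 0 0)). simpl. f_equal; ring. }
  change (sm (Vt N) N + - Srow N - - Srow 0%nat - sm (Vt 0%nat) N = 0) in Hcol.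
  rewrite S0, SN, V0, VN, gN, g0 in Hcol. lra.
Qed.

Definition Dw (f : R -> R) (d lo hi s : R) := forall eps, 0 < eps -> exists del, 0 < del /\
  forall x, lo <= x <= hi -> x <> s -> Rabs (x - s) < del -> Rabs ((f x - f s) / (x - s) - d) < eps.
Definition Cw (f : R -> R) (lo hi s : R) := forall eps, 0 < eps -> exists del, 0 < del /\
  forall x, lo <= x <= hi -> Rabs (x - s) < del -> Rabs (f x - f s) < eps.

Lemma Dw_restrict f d lo hi lo' hi' s : lo <= lo' -> hi' <= hi -> Dw f d lo hi s -> Dw f d lo' hi' s.
Proof.
  intros H1 H2 H eps He. destruct (H eps He) as [del [Hd F]]. exists del; split; auto.
  intros; apply F; auto; lra.
Qed.

Lemma Cw_restrict f lo hi lo' hi' s : lo <= lo' -> hi' <= hi -> Cw f lo hi s -> Cw f lo' hi' s.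
Proof.
  intros H1 H2 H eps He. destruct (H eps He) as [del [Hd F]]. exists del; split; auto.
  intros; apply F; auto; lra.
Qed.

Lemma Dw_shift f d lo hi s k : Dw f d lo hi (s + k) -> Dw (fun x => f (x + k)) d (lo - k) (hi - k) s.
Proof.
  intros H eps He. destruct (H eps He) as [del [Hd F]]. exists del; split; auto.
  intros x Hx Hxs Hdx. specialize (F (x + k)).
  replace (x + k - (s + k)) with (x - s) in F by ring. apply F; auto; lra.
Qed.

Lemma Cw_shift f lo hi s k : Cw f lo hi (s + k) -> Cw (fun x => f (x + k)) (lo - k) (hi - k) s.
Proof.
  intros H eps He. destruct (H eps He) as [del [Hd F]]. exists del; split; auto.
  intros x Hx Hdx. specialize (F (x + k)).
  replace (x + k - (s + k)) with (x - s) in F by ring. apply F; auto; lra.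
Qed.

Lemma Dw_lin f1 f2 d1 d2 a b e lo hi s : Dw f1 d1 lo hi s -> Dw f2 d2 lo hi s ->
  Dw (fun x => a + b * f1 x + e * f2 x) (b * d1 + e * d2) lo hi s.
Proof.
  intros H1 H2 eps He.
  set (e' := eps / (Rabs b + Rabs e + 1)).
  assert (He' : 0 < e') by (unfold e'; apply Rdiv_lt_0_compat; auto; pose proof (Rabs_pos b); pose proof (Rabs_pos e); lra).
  destruct (H1 e' He') as [d1' [Hd1 F1]]. destruct (H2 e' He') as [d2' [Hd2 F2]].
  exists (Rmin d1' d2'); split; [apply Rmin_pos; auto|].
  intros x Hx Hxs Hdx. pose proof (Rmin_l d1' d2'); pose proof (Rmin_r d1' d2').
  assert (A1 := F1 x Hx Hxs ltac:(lra)). assert (A2 := F2 x Hx Hxs ltac:(lra)).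
  assert (Hn : x - s <> 0) by lra.
  replace ((a + b * f1 x + e * f2 x - (a + b * f1 s + e * f2 s)) / (x - s) - (b * d1 + e * d2))
    with (b * ((f1 x - f1 s) / (x - s) - d1) + e * ((f2 x - f2 s) / (x - s) - d2)) by (field; auto).
  eapply Rle_lt_trans; [apply Rabs_triang|]. rewrite !Rabs_mult.
  assert (Rabs b * Rabs ((f1 x - f1 s) / (x - s) - d1) <= Rabs b * e') by (apply Rmult_le_compat_l; [apply Rabs_pos|lra]).
  assert (Rabs e * Rabs ((f2 x - f2 s) / (x - s) - d2) <= Rabs e * e') by (apply Rmult_le_compat_l; [apply Rabs_pos|lra]).
  assert (Rabs b * e' + Rabs e * e' < eps).
  { unfold e'. pose proof (Rabs_pos b); pose proof (Rabs_pos e).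
    apply (Rmult_lt_reg_r (Rabs b + Rabs e + 1)); [lra|]. field_simplify; lra. }
  lra.
Qed.

Lemma Cw_lin f1 a lo hi s : Cw f1 lo hi s -> Cw (fun x => f1 x + a) lo hi s.
Proof.
  intros H eps He. destruct (H eps He) as [del [Hd F]]. exists del; split; auto.
  intros x Hx Hdx. replace (f1 x + a - (f1 s + a)) with (f1 x - f1 s) by ring. auto.
Qed.

Lemma Dw_ext f g d lo hi s : lo <= s <= hi -> (forall x, lo <= x <= hi -> f x = g x) -> Dw g d lo hi s -> Dw f d lo hi s.
Proof.
  intros Hs E H eps He. destruct (H eps He) as [del [Hd F]]. exists del; split; auto.
  intros. rewrite !E; auto.
Qed.

Lemma Cw_ext f g lo hi s : lo <= s <= hi -> (forall x, lo <= x <= hi -> f x = g x) -> Cw g lo hi s -> Cw f lo hi s.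
Proof.
  intros Hs E H eps He. destruct (H eps He) as [del [Hd F]]. exists del; split; auto.
  intros. rewrite !E; auto.
Qed.

Lemma Dw_glue f g h d lo m hi s : lo <= m <= hi -> lo <= s <= hi ->
  (forall x, lo <= x <= m -> f x = g x) -> (forall x, m <= x <= hi -> f x = h x) ->
  (s <= m -> Dw g d lo m s) -> (m <= s -> Dw h d m hi s) -> Dw f d lo hi s.
Proof.
  intros Hm Hs Eg Eh Hg Hh.
  destruct (Rtotal_order s m) as [L|[L|L]].
  - specialize (Hg ltac:(lra)). intros eps He. destruct (Hg eps He) as [del [Hd F]].
    exists (Rmin del (m - s)); split; [apply Rmin_pos; lra|].
    intros x Hx Hxs Hdx. pose proof (Rmin_l del (m - s)); pose proof (Rmin_r del (m - s)).
    assert (x < m) by (revert Hdx; split_Rabs; lra).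
    rewrite !Eg by lra. apply F; auto; lra.
  - subst s. specialize (Hg ltac:(lra)). specialize (Hh ltac:(lra)).
    intros eps He. destruct (Hg eps He) as [d1 [Hd1 F1]]. destruct (Hh eps He) as [d2 [Hd2 F2]].
    exists (Rmin d1 d2); split; [apply Rmin_pos; lra|].
    intros x Hx Hxs Hdx. pose proof (Rmin_l d1 d2); pose proof (Rmin_r d1 d2).
    destruct (Rle_dec x m).
    + rewrite !Eg by lra. apply F1; auto; lra.
    + rewrite !Eh by lra. apply F2; auto; lra.
  - specialize (Hh ltac:(lra)). intros eps He. destruct (Hh eps He) as [del [Hd F]].
    exists (Rmin del (s - m)); split; [apply Rmin_pos; lra|].
    intros x Hx Hxs Hdx. pose proof (Rmin_l del (s - m)); pose proof (Rmin_r del (s - m)).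
    assert (x > m) by (revert Hdx; split_Rabs; lra).
    rewrite !Eh by lra. apply F; auto; lra.
Qed.

Lemma Cw_glue f g h lo m hi s : lo <= m <= hi -> lo <= s <= hi ->
  (forall x, lo <= x <= m -> f x = g x) -> (forall x, m <= x <= hi -> f x = h x) ->
  (s <= m -> Cw g lo m s) -> (m <= s -> Cw h m hi s) -> Cw f lo hi s.
Proof.
  intros Hm Hs Eg Eh Hg Hh.
  destruct (Rtotal_order s m) as [L|[L|L]].
  - specialize (Hg ltac:(lra)). intros eps He. destruct (Hg eps He) as [del [Hd F]].
    exists (Rmin del (m - s)); split; [apply Rmin_pos; lra|].
    intros x Hx Hdx. pose proof (Rmin_l del (m - s)); pose proof (Rmin_r del (m - s)).
    assert (x < m) by (revert Hdx; split_Rabs; lra).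
    rewrite !Eg by lra. apply F; auto; lra.
  - subst s. specialize (Hg ltac:(lra)). specialize (Hh ltac:(lra)).
    intros eps He. destruct (Hg eps He) as [d1 [Hd1 F1]]. destruct (Hh eps He) as [d2 [Hd2 F2]].
    exists (Rmin d1 d2); split; [apply Rmin_pos; lra|].
    intros x Hx Hdx. pose proof (Rmin_l d1 d2); pose proof (Rmin_r d1 d2).
    destruct (Rle_dec x m).
    + rewrite !Eg by lra. apply F1; auto; lra.
    + rewrite !Eh by lra. apply F2; auto; lra.
  - specialize (Hh ltac:(lra)). intros eps He. destruct (Hh eps He) as [del [Hd F]].
    exists (Rmin del (s - m)); split; [apply Rmin_pos; lra|].
    intros x Hx Hdx. pose proof (Rmin_l del (s - m)); pose proof (Rmin_r del (s - m)).
    assert (x > m) by (revert Hdx; split_Rabs; lra).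
    rewrite !Eh by lra. apply F; auto; lra.
Qed.

Lemma D_in_to_Dw f df s : D_in f df I01 s -> Dw f (df s) 0 1 s.
Proof.
  intros H eps He. destruct (H eps He) as [del [Hd F]]. exists del; split; [lra|].
  intros x Hx Hxs Hdx. specialize (F x). simpl in F. unfold R_dist in F. apply F.
  split; [split; [exact Hx| auto]| auto].
Qed.

Lemma Dw_to_D_in f df s : Dw f (df s) 0 1 s -> D_in f df I01 s.
Proof.
  intros H eps He. destruct (H eps He) as [del [Hd F]]. exists del; split; [lra|].
  intros x [[Hx Hxs] Hdx]. simpl in *. unfold R_dist in *. apply F; auto.
Qed.

Lemma cont_to_Cw f s : 0 <= s <= 1 -> continue_in f I01 s -> Cw f 0 1 s.
Proof.
  intros Hs H eps He. destruct (H eps He) as [del [Hd F]]. exists del; split; [lra|].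
  intros x Hx Hdx. destruct (Req_dec x s) as [E|E].
  - subst; rewrite Rminus_diag, Rabs_R0; auto.
  - specialize (F x). simpl in F. unfold R_dist in F. apply F. split; [split; [exact Hx| auto]| auto].
Qed.

Lemma Cw_to_cont f s : Cw f 0 1 s -> continue_in f I01 s.
Proof.
  intros H eps He. destruct (H eps He) as [del [Hd F]]. exists del; split; [lra|].
  intros x [[Hx Hxs] Hdx]. simpl in *. unfold R_dist in *. apply F; auto.
Qed.

Lemma Dw_to_Cw f d lo hi s : Dw f d lo hi s -> Cw f lo hi s.
Proof.
  intros H eps He. destruct (H 1 ltac:(lra)) as [del [Hd F]].
  set (del' := Rmin del (eps / (Rabs d + 2))).
  assert (Hp : 0 < eps / (Rabs d + 2)) by (apply Rdiv_lt_0_compat; auto; pose proof (Rabs_pos d); lra).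
  exists del'; split; [apply Rmin_pos; auto|].
  assert (L1 : del' <= del) by apply Rmin_l. assert (L2 : del' <= eps / (Rabs d + 2)) by apply Rmin_r.
  clearbody del'. intros x Hx Hdx.
  destruct (Req_dec x s) as [E|E].
  - subst; rewrite Rminus_diag, Rabs_R0; auto.
  - assert (Hdx' : Rabs (x - s) < del) by lra. specialize (F x Hx E Hdx').
    assert (Hn : x - s <> 0) by lra.
    replace (f x - f s) with ((f x - f s) / (x - s) * (x - s)) by (field; auto).
    rewrite Rabs_mult.
    assert (Rabs ((f x - f s) / (x - s)) <= Rabs d + 1).
    { replace ((f x - f s) / (x - s)) with (((f x - f s) / (x - s) - d) + d) by ring.
      pose proof (Rabs_triang ((f x - f s) / (x - s) - d) d). lra. }
    assert (Rabs (x - s) < eps / (Rabs d + 2)) by lra.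
    pose proof (Rabs_pos (x - s)). pose proof (Rabs_pos ((f x - f s) / (x - s))).
    apply Rle_lt_trans with ((Rabs d + 1) * Rabs (x - s)).
    + apply Rmult_le_compat_r; auto.
    + assert (eps / (Rabs d + 2) * (Rabs d + 2) = eps) by (field; pose proof (Rabs_pos d); lra).
      pose proof (Rabs_pos d). nra.
Qed.

Lemma Cw_comp f h lo hi s : Cw f lo hi s -> continuity h -> Cw (fun t => h (f t)) lo hi s.
Proof.
  intros H Hc eps He. destruct (Hc (f s) eps He) as [d1 [Hd1 F1]].
  destruct (H d1 Hd1) as [d2 [Hd2 F2]]. exists d2; split; auto.
  intros x Hx Hdx. destruct (Req_dec (f x) (f s)) as [E|E].
  - rewrite E, Rminus_diag, Rabs_R0; auto.
  - specialize (F1 (f x)). simpl in F1. unfold R_dist in F1. apply F1.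
    split; [split; [exact I| intro Z; apply E; auto] | apply F2; auto].
Qed.

Lemma cont_on01_sub_comp f h k : (forall s, 0 <= s <= 1 -> Cw f 0 1 s) -> continuity h ->
  cont_on01' (fun t => h (f t - k)).
Proof.
  intros H Hc s Hs. apply Cw_to_cont.
  apply (Cw_comp (fun t => f t - k)); auto.
  intros eps He. destruct (H s Hs eps He) as [d [Hd F]]. exists d; split; auto.
  intros x Hx Hdx. replace (f x - k - (f s - k)) with (f x - f s) by ring. auto.
Qed.

Definition good (c : R) (A : piece) (al : R -> R) :=
  lo A <= hi A /\
  (forall s, lo A <= s <= hi A -> tang A s = (c * cos (al s), c * sin (al s))) /\
  (forall s, lo A <= s <= hi A ->
     Dw (fun x => fst (pos A x)) (fst (tang A s)) (lo A) (hi A) s /\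
     Dw (fun x => snd (pos A x)) (snd (tang A s)) (lo A) (hi A) s) /\
  (forall s, lo A <= s <= hi A -> Cw al (lo A) (hi A) s).

Definition cang (A B : piece) (al be : R -> R) (s : R) : R :=
  if Rle_dec s (hi A - lo A) then al (s + lo A)
  else be (s - (hi A - lo A) + lo B) + al (hi A) - be (lo B).

Lemma rot_cs c a b p : 0 < c ->
  rot (vscale (/ c) (c * cos a, c * sin a)) (vscale (/ c) (c * cos b, c * sin b)) p = rotA (b - a) p.
Proof.
  intros Hc. unfold rot, vscale, rotA; simpl.
  replace (/ c * (c * cos a)) with (cos a) by (field; lra).
  replace (/ c * (c * sin a)) with (sin a) by (field; lra).
  replace (/ c * (c * cos b)) with (cos b) by (field; lra).
  replace (/ c * (c * sin b)) with (sin b) by (field; lra).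
  rewrite cos_minus, sin_minus. f_equal; ring.
Qed.

Lemma rotA_cs t c a : rotA t (c * cos a, c * sin a) = (c * cos (a + t), c * sin (a + t)).
Proof. unfold rotA; simpl. rewrite cos_plus, sin_plus. f_equal; ring. Qed.

Lemma rotA_zero t : rotA t (0, 0) = (0, 0).
Proof. unfold rotA; simpl. f_equal; ring. Qed.

Lemma Dw_ext' f g d lo hi s : (forall x, f x = g x) -> Dw g d lo hi s -> Dw f d lo hi s.
Proof.
  intros E H eps He. destruct (H eps He) as [del [Hd F]]. exists del; split; auto.
  intros. rewrite !E; auto.
Qed.

Lemma Dw_T f1 f2 d1 d2 lo hi s P Q u w :
  Dw f1 d1 lo hi s -> Dw f2 d2 lo hi s ->
  Dw (fun x => fst (vadd P (rot u w (vsub (f1 x, f2 x) Q)))) (fst (rot u w (d1, d2))) lo hi s /\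
  Dw (fun x => snd (vadd P (rot u w (vsub (f1 x, f2 x) Q)))) (snd (rot u w (d1, d2))) lo hi s.
Proof.
  intros H1 H2. unfold vadd, rot, vsub; simpl.
  set (co := fst u * fst w + snd u * snd w). set (si := fst u * snd w - snd u * fst w).
  split.
  - replace (co * d1 - si * d2) with (co * d1 + - si * d2) by ring.
    eapply Dw_ext'; [|apply (Dw_lin f1 f2 d1 d2 (fst P - co * fst Q + si * snd Q) co (- si)); eauto].
    intros; simpl; ring.
  - replace (si * d1 + co * d2) with (si * d1 + co * d2) by ring.
    eapply Dw_ext'; [|apply (Dw_lin f1 f2 d1 d2 (snd P - si * fst Q - co * snd Q) si co); eauto].
    intros; simpl; ring.
Qed.

Lemma Cw_ext' f g lo hi s : (forall x, f x = g x) -> Cw g lo hi s -> Cw f lo hi s.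
Proof.
  intros E H eps He. destruct (H eps He) as [del [Hd F]]. exists del; split; auto.
  intros. rewrite !E; auto.
Qed.

Lemma Dw_TA f1 f2 d1 d2 lo hi s P Q t :
  Dw f1 d1 lo hi s -> Dw f2 d2 lo hi s ->
  Dw (fun x => fst (vadd P (rotA t (vsub (f1 x, f2 x) Q)))) (fst (rotA t (d1, d2))) lo hi s /\
  Dw (fun x => snd (vadd P (rotA t (vsub (f1 x, f2 x) Q)))) (snd (rotA t (d1, d2))) lo hi s.
Proof.
  intros H1 H2. unfold vadd, rotA, vsub; simpl.
  split.
  - replace (cos t * d1 - sin t * d2) with (cos t * d1 + - sin t * d2) by ring.
    eapply Dw_ext'; [|apply (Dw_lin f1 f2 d1 d2 (fst P - cos t * fst Q + sin t * snd Q) (cos t) (- sin t)); eauto].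
    intros; simpl; ring.
  - eapply Dw_ext'; [|apply (Dw_lin f1 f2 d1 d2 (snd P - sin t * fst Q - cos t * snd Q) (sin t) (cos t)); eauto].
    intros; simpl; ring.
Qed.

Section Concat.
Variables (c : R) (A B : piece) (al be : R -> R).
Hypothesis Hc : 0 < c.
Hypothesis GA : good c A al.
Hypothesis GB : good c B be.

Let LA := hi A - lo A.
Let LB := hi B - lo B.
Let dl := al (hi A) - be (lo B).

Lemma c_rot p : rot (vscale (/ c) (tang B (lo B))) (vscale (/ c) (tang A (hi A))) p = rotA dl p.
Proof.
  destruct GA as [HA1 [HA2 _]]. destruct GB as [HB1 [HB2 _]].
  rewrite HB2, HA2 by lra. apply rot_cs; auto.
Qed.

Lemma c_pos1 s : s <= LA -> pos (concat c A B) s = pos A (s + lo A).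
Proof. intros H. unfold concat; simpl. destruct Rle_dec; [auto | unfold LA in H; lra]. Qed.

Lemma c_tang1 s : s <= LA -> tang (concat c A B) s = tang A (s + lo A).
Proof. intros H. unfold concat; simpl. destruct Rle_dec; [auto | unfold LA in H; lra]. Qed.

Lemma vadd0 p : vadd p (0, 0) = p.
Proof. destruct p; unfold vadd; simpl; f_equal; ring. Qed.

Lemma c_posM s : LA <= s -> pos (concat c A B) s =
  vadd (pos A (hi A)) (rotA dl (vsub (pos B (s - LA + lo B)) (pos B (lo B)))).
Proof.
  intros H. unfold concat; simpl. fold LA. destruct Rle_dec.
  - assert (s = LA) by lra. subst s. unfold LA. replace (hi A - lo A + lo A) with (hi A) by ring.
    replace (hi A - lo A - (hi A - lo A) + lo B) with (lo B) by ring.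
    unfold vsub. rewrite !Rminus_diag, rotA_zero, vadd0. auto.
  - rewrite c_rot. auto.
Qed.

Lemma c_tangM s : LA <= s -> tang (concat c A B) s = rotA dl (tang B (s - LA + lo B)).
Proof.
  intros H. destruct GA as [HA1 [HA2 _]]. destruct GB as [HB1 [HB2 _]].
  unfold concat; simpl. fold LA. destruct Rle_dec.
  - assert (s = LA) by lra. subst s. unfold LA. replace (hi A - lo A + lo A) with (hi A) by ring.
    replace (hi A - lo A - (hi A - lo A) + lo B) with (lo B) by ring.
    rewrite HA2, HB2, rotA_cs by lra. unfold dl. replace (be (lo B) + (al (hi A) - be (lo B))) with (al (hi A)) by ring.
    auto.
  - rewrite c_rot. auto.
Qed.

Lemma concat_good : good c (concat c A B) (cang A B al be).
Proof.
  pose proof GA as GA'. pose proof GB as GB'.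
  destruct GA' as [HA1 [HA2 [HA3 HA4]]]. destruct GB' as [HB1 [HB2 [HB3 HB4]]].
  assert (Hlo : lo (concat c A B) = 0) by reflexivity.
  assert (Hhi : hi (concat c A B) = LA + LB) by reflexivity.
  unfold good; rewrite Hlo, Hhi.
  assert (LA0 : 0 <= LA) by (unfold LA; lra). assert (LB0 : 0 <= LB) by (unfold LB; lra).
  assert (Cg1 : forall x, x <= LA -> cang A B al be x = al (x + lo A)).
  { intros x Hx. unfold cang. destruct Rle_dec; [auto| fold LA in n; lra]. }
  assert (Cg2 : forall x, LA <= x -> cang A B al be x = be (x - LA + lo B) + al (hi A) - be (lo B)).
  { intros x Hx. unfold cang. fold LA. destruct Rle_dec.
    - assert (x = LA) by lra. subst x. unfold LA. replace (hi A - lo A + lo A) with (hi A) by ring.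
      replace (hi A - lo A - (hi A - lo A) + lo B) with (lo B) by ring. ring.
    - auto. }
  split; [lra|]. split; [|split].
  - intros s Hs. destruct (Rle_dec s LA).
    + rewrite c_tang1, HA2, Cg1 by (unfold LA in *; lra). auto.
    + rewrite c_tangM, HB2, rotA_cs, Cg2 by (unfold LA, LB in *; lra).
      unfold dl. replace (be (s - LA + lo B) + (al (hi A) - be (lo B))) with (be (s - LA + lo B) + al (hi A) - be (lo B)) by ring.
      auto.
  - intros s Hs.
    assert (K1 : s <= LA -> Dw (fun x => fst (pos A (x + lo A))) (fst (tang (concat c A B) s)) 0 LA s /\
                           Dw (fun x => snd (pos A (x + lo A))) (snd (tang (concat c A B) s)) 0 LA s).
    { intros Hs'. rewrite c_tang1 by auto. destruct (HA3 (s + lo A)) as [D1 D2]; [unfold LA in *; lra|].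
      pose proof (Dw_shift _ _ _ _ _ _ D1) as D1'. pose proof (Dw_shift _ _ _ _ _ _ D2) as D2'.
      split; [apply (Dw_restrict _ _ (lo A - lo A) (hi A - lo A)) | apply (Dw_restrict _ _ (lo A - lo A) (hi A - lo A))];
        try (unfold LA; lra); assumption. }
    assert (K2 : LA <= s ->
       Dw (fun x => fst (vadd (pos A (hi A)) (rotA dl (vsub (pos B (x - LA + lo B)) (pos B (lo B))))))
          (fst (tang (concat c A B) s)) LA (LA + LB) s /\
       Dw (fun x => snd (vadd (pos A (hi A)) (rotA dl (vsub (pos B (x - LA + lo B)) (pos B (lo B))))))
          (snd (tang (concat c A B) s)) LA (LA + LB) s).
    { intros Hs'. rewrite c_tangM by auto.
      destruct (HB3 (s - LA + lo B)) as [D1 D2]; [unfold LA, LB in *; lra|].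
      replace (s - LA + lo B) with (s + (lo B - LA)) in * by ring.
      apply Dw_shift in D1. apply Dw_shift in D2.
      apply (Dw_restrict _ _ _ _ LA (LA + LB)) in D1; [|unfold LB; lra|unfold LB; lra].
      apply (Dw_restrict _ _ _ _ LA (LA + LB)) in D2; [|unfold LB; lra|unfold LB; lra].
      destruct (Dw_TA _ _ _ _ _ _ _ (pos A (hi A)) (pos B (lo B)) dl D1 D2) as [E1 E2].
      destruct (tang B (s + (lo B - LA))) as [t1 t2] eqn:Et. simpl in E1, E2 |- *.
      split; (eapply Dw_ext'; [|eassumption]); intros x;
        replace (x - LA + lo B) with (x + (lo B - LA)) by ring;
        destruct (pos B (x + (lo B - LA))); reflexivity. }
    split.
    + apply (Dw_glue _ (fun x => fst (pos A (x + lo A))) (fun x => fst (vadd (pos A (hi A)) (rotA dl (vsub (pos B (x - LA + lo B)) (pos B (lo B)))))) _ 0 LA (LA + LB)); try lra.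
      * intros; rewrite c_pos1; auto; lra.
      * intros; rewrite c_posM; auto; lra.
      * intros; apply K1; auto.
      * intros; apply K2; auto.
    + apply (Dw_glue _ (fun x => snd (pos A (x + lo A))) (fun x => snd (vadd (pos A (hi A)) (rotA dl (vsub (pos B (x - LA + lo B)) (pos B (lo B)))))) _ 0 LA (LA + LB)); try lra.
      * intros; rewrite c_pos1; auto; lra.
      * intros; rewrite c_posM; auto; lra.
      * intros; apply K1; auto.
      * intros; apply K2; auto.
  - intros s Hs.
    apply (Cw_glue _ (fun x => al (x + lo A)) (fun x => be (x + (lo B - LA)) + (al (hi A) - be (lo B))) 0 LA (LA + LB)); try lra.
    + intros; apply Cg1; lra.
    + intros; rewrite Cg2 by lra. replace (x - LA + lo B) with (x + (lo B - LA)) by ring. ring.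
    + intros Hs'. assert (C1 := HA4 (s + lo A) ltac:(unfold LA in *; lra)).
      pose proof (Cw_shift _ _ _ _ _ C1) as C1'.
      apply (Cw_restrict _ (lo A - lo A) (hi A - lo A)); try (unfold LA; lra); assumption.
    + intros Hs'. apply Cw_lin. assert (C1 := HB4 (s + (lo B - LA)) ltac:(unfold LA, LB in *; lra)).
      pose proof (Cw_shift _ _ _ _ _ C1) as C1'.
      apply (Cw_restrict _ (lo B - (lo B - LA)) (hi B - (lo B - LA))); try (unfold LB; lra); assumption.
Qed.

Lemma concat_pos0 : pos (concat c A B) 0 = pos A (lo A).
Proof.
  destruct GA as [HA1 _]. rewrite c_pos1 by (unfold LA; lra). f_equal; ring.
Qed.

Lemma concat_posE : pos (concat c A B) (LA + LB) =
  vadd (pos A (hi A)) (rotA dl (vsub (pos B (hi B)) (pos B (lo B)))).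
Proof.
  destruct GB as [HB1 _]. rewrite c_posM by (unfold LB; lra).
  replace (LA + LB - LA + lo B) with (hi B) by (unfold LB; ring). auto.
Qed.

Lemma cang0 : cang A B al be 0 = al (lo A).
Proof.
  destruct GA as [HA1 _]. unfold cang. destruct Rle_dec; [f_equal; ring| lra].
Qed.

Lemma cangE : cang A B al be (LA + LB) = be (hi B) + al (hi A) - be (lo B).
Proof.
  destruct GA as [HA1 _]. destruct GB as [HB1 _]. unfold cang. fold LA. destruct Rle_dec.
  - unfold LB in *. assert (E : hi B = lo B) by lra. rewrite E.
    replace (LA + (lo B - lo B) + lo A) with (hi A) by (unfold LA; ring). ring.
  - replace (LA + LB - LA + lo B) with (hi B) by (unfold LB; ring). auto.
Qed.

End Concat.

Lemma period_cs (m : Z) : cos (2 * PI * IZR m) = 1 /\ sin (2 * PI * IZR m) = 0.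
Proof.
  assert (S0 : sin (IZR m * PI) = 0) by (apply sin_eq_0_1; exists m; auto).
  replace (2 * PI * IZR m) with (2 * (IZR m * PI)) by ring.
  rewrite cos_2a_sin, sin_2a, S0. split; ring.
Qed.

Lemma Cw_cscale f k lo hi s : Cw f lo hi s -> Cw (fun x => k * cos (f x)) lo hi s /\ Cw (fun x => k * sin (f x)) lo hi s.
Proof.
  intros H. split.
  - apply (Cw_comp f (fun z => k * cos z)); auto. intros z.
    apply (continuity_pt_mult (fun _ => k) cos); [apply continuity_pt_const; intros ? ?; auto| apply continuity_cos].
  - apply (Cw_comp f (fun z => k * sin z)); auto. intros z.
    apply (continuity_pt_mult (fun _ => k) sin); [apply continuity_pt_const; intros ? ?; auto| apply continuity_sin].
Qed.

Section Main.
Variables (gam dgam : R -> pt2) (c : R) (theta : R -> R) (m : Z).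
Hypothesis Hc : 0 < c.
Hypothesis Hd : deriv_on01 gam dgam.
Hypothesis Hth : cont_on01 theta.
Hypothesis Hdg : forall s, I01 s -> dgam s = (c * cos (theta s), c * sin (theta s)).
Hypothesis Hm : theta 1 - theta 0 = 2 * PI * IZR m.

Lemma piece_good a b : 0 <= a <= b -> b <= 1 -> good c (Piece gam dgam a b) theta.
Proof.
  intros Ha Hb. unfold good; simpl. split; [lra|]. split; [|split].
  - intros s Hs. apply Hdg. unfold I01; lra.
  - intros s Hs. destruct (Hd s ltac:(unfold I01; lra)) as [D1 D2].
    apply D_in_to_Dw in D1. apply D_in_to_Dw in D2.
    split; apply (Dw_restrict _ _ 0 1); auto; lra.
  - intros s Hs. apply (Cw_restrict _ 0 1); try lra. apply cont_to_Cw; [lra|]. apply Hth. unfold I01; lra.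
Qed.

Definition formula (c1 c2 : R) : pt2 :=
  vadd (vadd (gam c1) (rotA (theta c1 - theta c2) (vsub (gam 1) (gam c2))))
       (rotA (theta 1 - theta c2) (vsub (gam c2) (gam c1))).

Lemma rear_props c1 c2 : 0 <= c1 <= c2 -> c2 <= 1 ->
  rearranged c gam dgam c1 c2 0 = gam 0 /\
  rearranged c gam dgam c1 c2 1 = formula c1 c2 /\
  exists dr : R -> pt2,
      deriv_on01 (rearranged c gam dgam c1 c2) dr /\
      cont2_on01 dr /\
      dr 0 = dr 1.
Proof.
  intros H1 H2.
  set (g1 := Piece gam dgam 0 c1). set (g2 := Piece gam dgam c1 c2). set (g3 := Piece gam dgam c2 1).
  assert (G1 : good c g1 theta) by (apply piece_good; lra).
  assert (G2 : good c g2 theta) by (apply piece_good; lra).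
  assert (G3 : good c g3 theta) by (apply piece_good; lra).
  set (Cin := concat c g1 g3). set (ga1 := cang g1 g3 theta theta).
  assert (GI : good c Cin ga1) by (apply concat_good; auto).
  set (Cout := concat c Cin g2). set (ga2 := cang Cin g2 ga1 theta).
  assert (GO : good c Cout ga2) by (apply concat_good; auto).
  assert (Er : rearranged c gam dgam c1 c2 = pos Cout) by reflexivity.
  assert (HloI : lo Cin = 0) by reflexivity.
  assert (HhiI : hi Cin = (c1 - 0) + (1 - c2)) by reflexivity.
  assert (HloO : lo Cout = 0) by reflexivity.
  assert (HhiO : hi Cout = 1) by (unfold Cout, concat; simpl; ring).
  assert (Ga1E : ga1 (hi Cin) = theta 1 + theta c1 - theta c2).
  { rewrite HhiI. apply (cangE c g1 g3 theta theta); auto. }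
  assert (Ga2E : ga2 1 = theta 1).
  { replace 1 with ((hi Cin - lo Cin) + (hi g2 - lo g2)) at 1 by (rewrite HhiI, HloI; simpl; ring).
    unfold ga2. rewrite (cangE c Cin g2 ga1 theta); auto. rewrite Ga1E. simpl. ring. }
  assert (Ga20 : ga2 0 = theta 0).
  { unfold ga2. rewrite (cang0 c Cin g2 ga1 theta); auto. rewrite HloI. unfold ga1.
    rewrite (cang0 c g1 g3 theta theta); auto. }
  rewrite Er. split; [|split].
  - unfold Cout. rewrite (concat_pos0 c Cin g2 ga1); auto. rewrite HloI.
    unfold Cin. rewrite (concat_pos0 c g1 g3 theta); auto.
  - replace 1 with ((hi Cin - lo Cin) + (hi g2 - lo g2)) at 1 by (rewrite HhiI, HloI; simpl; ring).
    unfold Cout. rewrite (concat_posE c Cin g2 ga1 theta); auto.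
    replace (hi Cin) with ((hi g1 - lo g1) + (hi g3 - lo g3)) at 1 by (rewrite HhiI; simpl; ring).
    unfold Cin. rewrite (concat_posE c g1 g3 theta theta); auto.
    fold Cin. rewrite Ga1E. simpl. unfold formula.
    replace (theta 1 + theta c1 - theta c2 - theta c1) with (theta 1 - theta c2) by ring. auto.
  - destruct GO as [_ [T [DD CC]]]. rewrite HloO, HhiO in T, DD, CC.
    exists (tang Cout). split; [|split].
    + intros s Hs. destruct (DD s Hs) as [D1 D2]. split; apply Dw_to_D_in; auto.
    + split; intros s Hs; apply Cw_to_cont; destruct (Cw_cscale ga2 c 0 1 s (CC s Hs)) as [K1 K2].
      * eapply Cw_ext; [exact Hs| |exact K1]. intros x Hx. rewrite T; auto.
      * eapply Cw_ext; [exact Hs| |exact K2]. intros x Hx. rewrite T; auto.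
    + rewrite !T by lra. rewrite Ga20, Ga2E.
      replace (theta 1) with (theta 0 + 2 * PI * IZR m) by lra.
      destruct (period_cs m) as [P1 P2]. rewrite cos_plus, sin_plus, P1, P2. f_equal; ring.
Qed.

End Main.

Lemma UC2_ext f g : (forall x y, f x y = g x y) -> UC2 g -> UC2 f.
Proof.
  intros E H eps He. destruct (H eps He) as [d [Hd F]]. exists d; split; auto.
  intros. rewrite !E; auto.
Qed.

Lemma UC2_cos_minus f g : UC2 (fun x y => cos (f x y)) -> UC2 (fun x y => cos (g x y)) ->
  UC2 (fun x y => sin (f x y)) -> UC2 (fun x y => sin (g x y)) -> UC2 (fun x y => cos (f x y - g x y)).
Proof.
  intros. apply (UC2_ext _ (fun x y => cos (f x y) * cos (g x y) + sin (f x y) * sin (g x y))).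
  - intros; apply cos_minus.
  - apply UC2_plus; apply UC2_mult; auto.
Qed.

Lemma UC2_sin_minus f g : UC2 (fun x y => cos (f x y)) -> UC2 (fun x y => cos (g x y)) ->
  UC2 (fun x y => sin (f x y)) -> UC2 (fun x y => sin (g x y)) -> UC2 (fun x y => sin (f x y - g x y)).
Proof.
  intros. apply (UC2_ext _ (fun x y => sin (f x y) * cos (g x y) - cos (f x y) * sin (g x y))).
  - intros; apply sin_minus.
  - apply UC2_minus; apply UC2_mult; auto.
Qed.

Ltac uc := repeat first [ apply UC2_minus | apply UC2_plus | apply UC2_opp | apply UC2_mult | apply UC2_cos_minus
  | apply UC2_sin_minus | apply UC2_const | assumption | apply UC2_y ].

Lemma rotA_vadd t p q : rotA t (vadd p q) = vadd (rotA t p) (rotA t q).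
Proof. unfold rotA, vadd; simpl; f_equal; ring. Qed.

Lemma rotA_id t p : cos t = 1 -> sin t = 0 -> rotA t p = p.
Proof. intros C S; destruct p; unfold rotA; simpl; rewrite C, S; f_equal; ring. Qed.

Lemma rotA_inj0 t p : rotA t p = (0, 0) -> p = (0, 0).
Proof.
  intros E. assert (N : nrm (rotA t p) = nrm p) by apply nrm_rotA.
  rewrite E in N. unfold nrm in N; simpl in N. destruct p as [a b]; simpl in N.
  f_equal; nra.
Qed.

Theorem main_thm (gam dgam : R -> pt2) (c : R) (theta : R -> R) (m : Z) :
  0 < c ->
  deriv_on01 gam dgam ->
  cont2_on01 dgam ->
  (forall s, I01 s -> norm2 (dgam s) = c) ->
  cont_on01 theta ->
  (forall s, I01 s -> dgam s = (c * cos (theta s), c * sin (theta s))) ->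
  theta 1 - theta 0 = 2 * PI * IZR m ->
  m <> 0%Z ->
  exists c1 c2 : R,
    0 <= c1 <= c2 /\ c2 <= 1 /\
    rearranged c gam dgam c1 c2 0 = rearranged c gam dgam c1 c2 1 /\
    exists dr : R -> pt2,
      deriv_on01 (rearranged c gam dgam c1 c2) dr /\
      cont2_on01 dr /\
      dr 0 = dr 1.
Proof.
  intros Hc Hd Hdc Hn Hth Hdg Hm Hm0.
  destruct (classic (exists c1 c2, (0 <= c1 <= c2) /\ c2 <= 1 /\ formula gam theta c1 c2 = gam 0))
    as [[c1 [c2 [A1 [A2 A3]]]] | NE].
  - destruct (rear_props gam dgam c theta m Hc Hd Hth Hdg Hm c1 c2 A1 A2) as [R0 [R1 R2]].
    exists c1, c2. split; auto. split; auto. split; [rewrite R0, R1, A3; auto | exact R2].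
  - exfalso. apply Hm0.
    set (H := fun x y => rotA (theta y - theta 1) (vsub (formula gam theta (x * y) y) (gam 0))).
    set (W := vsub (gam 1) (gam 0)).
    assert (Cth : forall s, 0 <= s <= 1 -> Cw theta 0 1 s) by (intros; apply cont_to_Cw; auto; apply Hth; auto).
    assert (UCc : UC1 (fun t => cos (theta t))).
    { apply UC1_of_cont. intros s Hs. apply Cw_to_cont. apply Cw_comp; auto. apply continuity_cos. }
    assert (UCs : UC1 (fun t => sin (theta t))).
    { apply UC1_of_cont. intros s Hs. apply Cw_to_cont. apply Cw_comp; auto. apply continuity_sin. }
    assert (UCg1 : UC1 (fun t => fst (gam t))).
    { apply UC1_of_cont. intros s Hs. apply Cw_to_cont. apply (Dw_to_Cw _ (fst (dgam s))).
      apply (D_in_to_Dw (fun t => fst (gam t)) (fun t => fst (dgam t)) s). apply Hd; auto. }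
    assert (UCg2 : UC1 (fun t => snd (gam t))).
    { apply UC1_of_cont. intros s Hs. apply Cw_to_cont. apply (Dw_to_Cw _ (snd (dgam s))).
      apply (D_in_to_Dw (fun t => snd (gam t)) (fun t => snd (dgam t)) s). apply Hd; auto. }
    assert (UCphi : UC1 (fun t => theta t - theta 1)).
    { apply UC1_of_cont in Hth. intros eps He. destruct (Hth eps He) as [d [Hd0 F]]. exists d; split; auto.
      intros. replace (theta x - theta 1 - (theta y - theta 1)) with (theta x - theta y) by ring. auto. }
    assert (X1 : UC2 (fun x y => fst (gam (x * y)))) by apply (UC2_xy (fun t => fst (gam t))), UCg1.
    assert (X2 : UC2 (fun x y => snd (gam (x * y)))) by apply (UC2_xy (fun t => snd (gam t))), UCg2.
    assert (X3 : UC2 (fun x y => cos (theta (x * y)))) by apply (UC2_xy (fun t => cos (theta t))), UCc.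
    assert (X4 : UC2 (fun x y => sin (theta (x * y)))) by apply (UC2_xy (fun t => sin (theta t))), UCs.
    destruct (period_cs m) as [P1 P2].
    assert (Q1 : cos (theta 0 - theta 1) = 1) by (replace (theta 0 - theta 1) with (- (2 * PI * IZR m)) by lra; rewrite cos_neg; auto).
    assert (Q2 : sin (theta 0 - theta 1) = 0) by (replace (theta 0 - theta 1) with (- (2 * PI * IZR m)) by lra; rewrite sin_neg, P2; ring).
    assert (Z1 : forall a, cos (a - a) = 1) by (intros; rewrite Rminus_diag; apply cos_0).
    assert (Z2 : forall a, sin (a - a) = 0) by (intros; rewrite Rminus_diag; apply sin_0).
    assert (H0y : forall y, H 0 y = W).
    { intros y. unfold H, formula. rewrite Rmult_0_l.
      replace (vsub (vadd (vadd (gam 0) (rotA (theta 0 - theta y) (vsub (gam 1) (gam y))))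
                 (rotA (theta 1 - theta y) (vsub (gam y) (gam 0)))) (gam 0))
        with (vadd (rotA (theta 0 - theta y) (vsub (gam 1) (gam y))) (rotA (theta 1 - theta y) (vsub (gam y) (gam 0))))
        by (unfold vadd, vsub; simpl; f_equal; ring).
      rewrite rotA_vadd, !rotA_comp.
      replace (theta y - theta 1 + (theta 0 - theta y)) with (theta 0 - theta 1) by ring.
      replace (theta y - theta 1 + (theta 1 - theta y)) with (theta 1 - theta 1) by ring.
      rewrite rotA_id, (rotA_id (theta 1 - theta 1)); auto.
      unfold W, vadd, vsub; simpl; f_equal; ring. }
    assert (Hx1 : forall x, H x 1 = W).
    { intros x. unfold H, formula. rewrite Rmult_1_r.
      rewrite (rotA_id (theta 1 - theta 1)); auto.
      assert (E0 : vsub (gam 1) (gam 1) = (0, 0)) by (unfold vsub; f_equal; ring).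
      rewrite E0, rotA_zero, rotA_id; auto.
      unfold W, vadd, vsub; simpl; f_equal; ring. }
    assert (H1y : forall y, H 1 y = rotA (theta y - theta 1) W).
    { intros y. unfold H, formula. rewrite Rmult_1_l.
      assert (E0 : vsub (gam y) (gam y) = (0, 0)) by (unfold vsub; f_equal; ring).
      rewrite E0, rotA_zero, (rotA_id (theta y - theta y)); auto. f_equal.
      unfold W, vadd, vsub; simpl; f_equal; ring. }
    assert (HW : H 0 0 = W) by apply H0y.
    assert (Hw := winding H (fun t => theta t - theta 1)).
    simpl in Hw. 
    assert (Fin : theta 1 - theta 1 = theta 0 - theta 1).
    { apply Hw; auto.
      - unfold H, formula, rotA, vadd, vsub; cbn [fst snd]. uc.
      - unfold H, formula, rotA, vadd, vsub; cbn [fst snd]. uc.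
      - intros x y Hx Hy E. apply NE. exists (x * y), y. split; [split; nra|]. split; [lra|].
        unfold H in E. apply rotA_inj0 in E. unfold vsub in E.
        destruct (formula gam theta (x * y) y) as [f1 f2]. destruct (gam 0) as [z1 z2].
        simpl in E. injection E; intros; f_equal; lra.
      - intros x Hx. unfold H. rewrite !Rmult_0_r. auto.
      - intros y Hy. rewrite HW. apply H0y.
      - intros x Hx. rewrite HW. apply Hx1.
      - intros y Hy. rewrite HW. apply H1y. }
    assert (2 * PI * IZR m = 0) by lra.
    assert (IZR m = 0).
    { pose proof PI_RGT_0. apply (Rmult_eq_reg_l (2 * PI)); [lra| lra]. }
    apply eq_IZR_R0; auto.
Qed.

Theorem theorem3p1 (gam dgam : R -> pt2) (c : R) (theta : R -> R) (m : Z) :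
  0 < c ->
  (* gamma is C^1 on [0,1] with derivative dgam *)
  deriv_on01 gam dgam ->
  cont2_on01 dgam ->
  (* constant speed c *)
  (forall s, I01 s -> norm2 (dgam s) = c) ->
  (* theta is a turning angle function for gamma *)
  cont_on01 theta ->
  (forall s, I01 s -> dgam s = (c * cos (theta s), c * sin (theta s))) ->
  theta 1 - theta 0 = 2 * PI * IZR m ->
  m <> 0%Z ->
  exists c1 c2 : R,
    0 <= c1 <= c2 /\ c2 <= 1 /\
    rearranged c gam dgam c1 c2 0 = rearranged c gam dgam c1 c2 1 /\
    exists dr : R -> pt2,
      deriv_on01 (rearranged c gam dgam c1 c2) dr /\
      cont2_on01 dr /\
      dr 0 = dr 1.
Proof.
  exact (main_thm gam dgam c theta m).
Qed.
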